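(* Let $f:\mathbb{R}^2\to\mathbb{C}$ be smooth and let $Q=I_1\times I_2$ be a rectangle in $\mathbb{R}^2$ ($I_1,I_2$ bounded intervals). For $\alpha=(\alpha_1,\alpha_2)\in\mathbb{Z}^2$ let $Q(\alpha)=\{(x_1,x_2):|I_i|\alpha_i-\tfrac{|I_i|}{2}\le x_i<|I_i|\alpha_i+\tfrac{|I_i|}{2},\ i=1,2\}$. Then there is an absolute constant $C$, independent of $Q$ and $f$, such that $$\sum_{\alpha\in\mathbb{Z}^2}\sup_{Q(\alpha)}|f|^2\le C\Big(\frac{|I_1|}{|I_2|}\int_{\mathbb{R}^2}|\partial_1 f|^2+|Q|\int_{\mathbb{R}^2}|\partial_2\partial_1 f|^2+\frac{|I_2|}{|I_1|}\int_{\mathbb{R}^2}|\partial_2 f|^2+\frac{1}{|Q|}\int_{\mathbb{R}^2}|f|^2\Big).$$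
   Context: $|I|$ denotes the length of an interval and $|Q|=|I_1||I_2|$ the area of $Q$. *)

(* Defs.v *)
From HB Require Import structures.
From mathcomp Require Import all_boot all_order all_algebra.
From mathcomp Require Import all_classical all_reals all_analysis.
Set Implicit Arguments. Unset Strict Implicit. Unset Printing Implicit Defensive.
Import Order.TTheory GRing.Theory Num.Theory.
Import numFieldNormedType.Exports.
Local Open Scope classical_set_scope.
Local Open Scope ring_scope.

Definition d1 {R : realType} (g : R -> R -> R) : R -> R -> R :=
  fun x y => derive1 (fun t => g t y) x.
Definition d2 {R : realType} (g : R -> R -> R) : R -> R -> R :=
  fun x y => derive1 (fun t => g x t) y.

(* g is C^infinity on R^2: there is a family (g i j) of jointly continuous
   functions with g 0 0 = g and d/dx_1 g i j = g (i+1) j,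
   d/dx_2 g i j = g i (j+1) everywhere (all partial derivatives of all orders
   exist and are continuous). *)
Definition smooth2 {R : realType} (g : R -> R -> R) : Prop :=
  exists G : nat -> nat -> R -> R -> R,
    G 0%N 0%N = g /\
    forall i j : nat,
      continuous (fun p : R * R => G i j p.1 p.2) /\
      forall x y : R,
        is_derive x 1 (fun t => G i j t y) (G i.+1 j x y) /\
        is_derive y 1 (fun t => G i j x t) (G i j.+1 x y).

(* A complex-valued function f = u + i v is given by its real and imaginary
   parts u, v; |f(x)|^2 = u(x)^2 + v(x)^2. *)
Definition cabs2 {R : realType} (u v : R -> R -> R) (x y : R) : R :=
  u x y ^+ 2 + v x y ^+ 2.

Definition int2 {R : realType} (h : R -> R -> R) : \bar R :=
  (\int[(@lebesgue_measure R \x @lebesgue_measure R)%E]_(p in [set: R * R])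
     (h p.1 p.2)%:E)%E.

Definition cell {R : realType} (l1 l2 : R) (a : int * int) : set (R * R) :=
  [set p | (l1 * a.1%:~R - l1 / 2 <= p.1 < l1 * a.1%:~R + l1 / 2) /\
           (l2 * a.2%:~R - l2 / 2 <= p.2 < l2 * a.2%:~R + l2 / 2)].

Definition supcell {R : realType} (u v : R -> R -> R) (l1 l2 : R)
  (a : int * int) : \bar R :=
  ereal_sup [set (cabs2 u v p.1 p.2)%:E | p in cell l1 l2 a].

(* Main.v *)
Require Import Defs.
From HB Require Import structures.
From mathcomp Require Import all_boot all_order all_algebra.
From mathcomp Require Import all_classical all_reals all_analysis.
From mathcomp Require Import lra ring zify.
From mathcomp Require Import measurable_realfun.
Import Order.TTheory GRing.Theory Num.Theory.
Import numFieldNormedType.Exports.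
Local Open Scope classical_set_scope.
Local Open Scope ring_scope.

Set Implicit Arguments. Unset Strict Implicit. Unset Printing Implicit Defensive.


Section S.
Variable R : realType.

Lemma nbhs_rat_itv (a : R) (P : set R) : nbhs a P ->
  exists q1 q2 : rat, ratr q1 < a < ratr q2 /\ `]ratr q1, ratr q2[ `<=` P.
Proof.
move=> /nbhs_ballP[e e0 aeP].
have [q1 /[!in_itv] /= /andP[q1l q1r]] := @rat_in_itvoo R (a - e) a ltac:(by rewrite ltrBlDr ltrDl).
have [q2 /[!in_itv] /= /andP[q2l q2r]] := @rat_in_itvoo R a (a + e) ltac:(by rewrite ltrDl).
exists q1, q2; split; first by rewrite q1r q2l.
move=> x /= /[!in_itv] /= /andP[xl xr]; apply: aeP.
rewrite /ball /= ltr_distlC; apply/andP; split; lra.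
Qed.

Lemma open_measurable2 (U : set (R * R)) : open U -> measurable U.
Proof.
move=> oU.
pose F (q : (rat * rat) * (rat * rat)) : set (R * R) :=
  if pselect (`]ratr q.1.1, ratr q.1.2[ `*` `]ratr q.2.1, ratr q.2.2[ `<=` U)
  then `]ratr q.1.1, ratr q.1.2[ `*` `]ratr q.2.1, ratr q.2.2[ else set0.
have -> : U = \bigcup_q F q.
  apply/seteqP; split; last first.
    by move=> p [q _]; rewrite /F; case: pselect => // H /H.
  move=> [a b] Uab; move: oU; rewrite openE => /(_ _ Uab) [[P Q] [Pa Qb] pqA].
  have [q1 [q2 [/andP[q1a aq2] PP]]] := nbhs_rat_itv Pa.
  have [q3 [q4 [/andP[q3a aq4] QQ]]] := nbhs_rat_itv Qb.
  exists ((q1, q2), (q3, q4)) => //; rewrite /F /=; case: pselect => /= H.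
    by split => /=; rewrite in_itv /= ?q1a ?aq2 ?q3a ?aq4.
  exfalso; apply: H => -[x y] [/= Hx Hy]; apply: pqA; split; [exact: PP|exact: QQ].
apply: countable_bigcupT_measurable => // q; rewrite /F; destruct pselect; last exact: measurable0.
by apply: measurableX; exact: measurable_itv.
Qed.

Lemma cont2_measurable (f : R * R -> R) : continuous f -> measurable_fun setT f.
Proof.
move=> /continuousP cf; apply: (measurability _ (RGenOpens.measurableE R)).
move=> _ [_ [a [b ->] <-]]; apply: measurableI => //.
apply: open_measurable2; apply: cf; exact: interval_open.
Qed.
End S.

Section S1.
Variable R : realType.
Notation mu := (@lebesgue_measure R).

Lemma der_cont (g g' : R -> R) : (forall x : R, is_derive x 1 g (g' x)) -> continuous g.
Proof.
move=> hg x; apply: differentiable_continuous; apply/derivable1_diffP.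
exact: ex_derive.
Qed.

Lemma cint (f : R -> R) (a b : R) : continuous f -> mu.-integrable `[a, b] (EFin \o f).
Proof.
move=> cf; apply: continuous_compact_integrable; first exact: segment_compact.
exact: continuous_subspaceT.
Qed.

Lemma ftc_R (g g' : R -> R) a b : a < b -> (forall x : R, is_derive x 1 g (g' x)) ->
  continuous g' -> \int[mu]_(x in `[a, b]) g' x = g b - g a.
Proof.
move=> ab hg cg'; rewrite /Rintegral (@continuous_FTC2 R g' g a b ab) //.
- exact: continuous_subspaceT.
- have cg := der_cont hg.
  split.
  + by move=> x _; exact: ex_derive.
  + by apply: cvg_at_right_filter; exact: cg.
  + by apply: cvg_at_left_filter; exact: cg.
- by move=> x _; rewrite derive1E; exact: derive_val.
Qed.

Lemma cs1 (g g' : R -> R) a b : a < b -> (forall x : R, is_derive x 1 g (g' x)) ->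
  continuous g' ->
  (g b - g a) ^+ 2 <= (b - a) * \int[mu]_(x in `[a, b]) (g' x ^+ 2).
Proof.
move=> ab hg cg'.
set lam := (g b - g a) / (b - a).

have cg'2 : continuous (fun x => g' x ^+ 2).
  by move=> x; apply: continuousM; exact: cg'.
have c2 : continuous (fun x => lam ^+ 2 - 2 * lam * g' x).
  move=> x; apply: cvgB; first exact: cvg_cst.
  by apply: cvgM; [exact: cvg_cst|exact: cg'].
have c3 : continuous (fun x => 2 * lam * g' x).
  by move=> x; apply: cvgM; [exact: cvg_cst|exact: cg'].
have h0 : 0 <= \int[mu]_(x in `[a, b]) ((g' x - lam) ^+ 2).
  by apply: Rintegral_ge0 => x _; exact: sqr_ge0.
have e1 : \int[mu]_(x in `[a, b]) ((g' x - lam) ^+ 2) =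
   \int[mu]_(x in `[a, b]) (g' x ^+ 2 + (lam ^+ 2 - 2 * lam * g' x)).
  by apply: eq_Rintegral => x _; ring.
have i1 := @cint _ a b cg'2.
have i2 := @cint _ a b c2.
have i3 := @cint _ a b c3.
have i4 := @cint _ a b cg'.
have i5 := @cint _ a b (@cst_continuous _ _ (lam ^+ 2)).
rewrite e1 (RintegralD _ i1 i2) // in h0.
rewrite (RintegralB _ i5 i3) // in h0.
rewrite Rintegral_cst // (RintegralZl _ _ i4) // in h0.
have hm : fine (mu `[a, b]%classic) = b - a.
  by rewrite lebesgue_measure_itv /= lte_fin ab /=.
rewrite (ftc_R ab hg cg') hm in h0.
have ba : 0 < b - a by rewrite subr_gt0.
have e : g b - g a = lam * (b - a) by rewrite /lam; field; rewrite lt0r_neq0.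
rewrite e in h0 *.
set I := \int[mu]_(x in _) _ in h0 *.
have := mulr_ge0 (ltW ba) h0.
nra.
Qed.


Lemma Rint_sub (h : R -> R) a b c d : continuous h -> (forall x, 0 <= h x) ->
  c <= a -> b <= d ->
  \int[mu]_(x in `[a, b]) h x <= \int[mu]_(x in `[c, d]) h x.
Proof.
move=> ch h0 ca bd; rewrite /Rintegral fine_le //.
- exact: integrable_fin_num (cint _ _ ch).
- exact: integrable_fin_num (cint _ _ ch).
- apply: ge0_subset_integral => //.
  + by apply/measurable_EFinP; apply: measurable_funTS; exact: continuous_measurable_fun.
  + by move=> x _; rewrite lee_fin.
  + by apply: subset_itv; rewrite bnd_simp.
Qed.

Lemma diffbound (g g' : R -> R) s x c l : (forall x : R, is_derive x 1 g (g' x)) ->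
  continuous g' -> s \in `[c, c + l] -> x \in `[c, c + l] ->
  (g x - g s) ^+ 2 <= l * \int[mu]_(t in `[c, c + l]) (g' t ^+ 2).
Proof.
move=> hg cg' /[!in_itv] /= /andP[cs sl] /andP[cx xl].
have cg'2 : continuous (fun x => g' x ^+ 2).
  by move=> y; apply: cvgM; exact: cg'.
have I0 : 0 <= \int[mu]_(t in `[c, c + l]) (g' t ^+ 2).
  by apply: Rintegral_ge0 => y _; exact: sqr_ge0.
have [xs|sx|<-] := ltgtP x s; last by rewrite subrr expr0n /= mulr_ge0 //; lra.
- have := cs1 xs hg cg'.
  have := @Rint_sub _ x s c (c + l) cg'2 (fun y => sqr_ge0 _) cx sl.
  move=> H1 H2; rewrite -sqrrN opprB; apply: (le_trans H2).
  apply: ler_pM; [lra| |lra|exact: H1].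
  by apply: Rintegral_ge0 => y _; exact: sqr_ge0.
- have := cs1 sx hg cg'.
  have := @Rint_sub _ s x c (c + l) cg'2 (fun y => sqr_ge0 _) cs xl.
  move=> H1 H2; apply: (le_trans H2).
  apply: ler_pM; [lra| |lra|exact: H1].
  by apply: Rintegral_ge0 => y _; exact: sqr_ge0.
Qed.

Lemma lemA_real (g k g' k' : R -> R) c l x :
  (forall x : R, is_derive x 1 g (g' x)) -> (forall x : R, is_derive x 1 k (k' x)) ->
  continuous g' -> continuous k' -> 0 < l -> x \in `[c, c + l] ->
  g x ^+ 2 + k x ^+ 2 <=
   2 / l * \int[mu]_(t in `[c, c + l]) (g t ^+ 2 + k t ^+ 2)
   + 2 * l * \int[mu]_(t in `[c, c + l]) (g' t ^+ 2 + k' t ^+ 2).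
Proof.
move=> hg hk cg' ck' l0 xI.
have cg := der_cont hg; have ck := der_cont hk.
have ch : continuous (fun t => g t ^+ 2 + k t ^+ 2).
  by move=> y; apply: cvgD; apply: cvgM; [exact: cg|exact: cg|exact: ck|exact: ck].
have cg'2 : continuous (fun x => g' x ^+ 2).
  by move=> y; apply: cvgM; exact: cg'.
have ck'2 : continuous (fun x => k' x ^+ 2).
  by move=> y; apply: cvgM; exact: ck'.
have cl : c <= c + l by lra.
have [s sI smin] := EVT_min cl (continuous_subspaceT ch).
have hm : fine (mu `[c, c + l]%classic) = l.
  by rewrite lebesgue_measure_itv /= lte_fin ltrDl l0 /= addrAC subrr add0r.
have hA : l * (g s ^+ 2 + k s ^+ 2) <= \int[mu]_(t in `[c, c + l]) (g t ^+ 2 + k t ^+ 2).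
  have := @le_Rintegral _ _ _ mu `[c, c + l] (fun=> g s ^+ 2 + k s ^+ 2)
    (fun t => g t ^+ 2 + k t ^+ 2) (measurable_itv _) (cint _ _ (@cst_continuous _ _ _))
    (cint _ _ ch).
  rewrite Rintegral_cst // hm mulrC; apply => t tI; apply: smin.
  exact: tI.
have Dg := diffbound hg cg' sI xI.
have Dk := diffbound hk ck' sI xI.
rewrite (RintegralD _ (cint _ _ cg'2) (cint _ _ ck'2)) //.
set A := \int[mu]_(t in _) (g t ^+ 2 + k t ^+ 2) in hA *.
set Bg := \int[mu]_(t in _) (g' t ^+ 2) in Dg *.
set Bk := \int[mu]_(t in _) (k' t ^+ 2) in Dk *.
have hA' : g s ^+ 2 + k s ^+ 2 <= A / l.
  by rewrite ler_pdivlMr // mulrC.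
have e1 : 2 / l * A = 2 * (A / l) by rewrite mulrAC mulrA.
rewrite e1.
have q1 : g x ^+ 2 <= 2 * g s ^+ 2 + 2 * (g x - g s) ^+ 2.
  have := sqr_ge0 (g x - 2 * g s); nra.
have q2 : k x ^+ 2 <= 2 * k s ^+ 2 + 2 * (k x - k s) ^+ 2.
  have := sqr_ge0 (k x - 2 * k s); nra.
nra.
Qed.


Lemma intE_co (h : R -> R) c d : continuous h ->
  (\int[mu]_(t in `[c, d[) (h t)%:E = (\int[mu]_(t in `[c, d]) h t)%:E)%E.
Proof.
move=> ch; rewrite integral_itv_bndo_bndc; last first.
  by apply/measurable_EFinP; apply: measurable_funTS; exact: continuous_measurable_fun.
rewrite /Rintegral fineK //; exact: integrable_fin_num (cint _ _ ch).
Qed.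

Lemma lemA (g k g' k' : R -> R) c d x :
  (forall x : R, is_derive x 1 g (g' x)) -> (forall x : R, is_derive x 1 k (k' x)) ->
  continuous g' -> continuous k' -> c < d -> x \in `[c, d[ ->
  ((g x ^+ 2 + k x ^+ 2)%:E <=
   (2 / (d - c))%:E * \int[mu]_(t in `[c, d[) ((g t ^+ 2 + k t ^+ 2)%:E)
   + (2 * (d - c))%:E * \int[mu]_(t in `[c, d[) ((g' t ^+ 2 + k' t ^+ 2)%:E))%E.
Proof.
move=> hg hk cg' ck' cd xI.
have cg := der_cont hg; have ck := der_cont hk.
have ch : continuous (fun t => g t ^+ 2 + k t ^+ 2).
  by move=> y; apply: cvgD; apply: cvgM; [exact: cg|exact: cg|exact: ck|exact: ck].
have ch' : continuous (fun t => g' t ^+ 2 + k' t ^+ 2).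
  by move=> y; apply: cvgD; apply: cvgM; [exact: cg'|exact: cg'|exact: ck'|exact: ck'].
rewrite (intE_co _ _ ch) (intE_co _ _ ch') -!EFinM -EFinD lee_fin.
have := @lemA_real g k g' k' c (d - c) x hg hk cg' ck'.
rewrite subr_gt0 addrC subrK; apply => //.
by move: xI; rewrite !in_itv /= => /andP[-> /ltW ->].
Qed.
End S1.

Section S2.
Variable R : realType.
Notation mu := (@lebesgue_measure R).
Local Open Scope ereal_scope.

Definition cont2 (H : R -> R -> R) := continuous (fun p : R * R => H p.1 p.2).

Lemma int2_iter (H : R -> R -> R) : cont2 H -> (forall x y, (0 <= H x y)%R) ->
  int2 H = \int[mu]_q \int[mu]_r (H r q)%:E.
Proof.
move=> cH H0; rewrite /int2 fubini_tonelli2 //.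
- by apply/measurable_EFinP; exact: cont2_measurable.
- by move=> p; rewrite lee_fin.
Qed.

Lemma slice1 (H : R -> R -> R) q : cont2 H -> continuous (fun r => H r q).
Proof.
move=> cH r.
have h1 : (fun r => (r, q)) @ r --> (r, q) by exact: (cvg_pair cvg_id (cvg_cst q)).
exact: (continuous_comp h1 (cH (r, q))).
Qed.

Lemma slice2 (H : R -> R -> R) r : cont2 H -> continuous (fun q => H r q).
Proof.
move=> cH q.
have h1 : (fun q => (r, q)) @ q --> (r, q) by exact: (cvg_pair (cvg_cst r) cvg_id).
exact: (continuous_comp h1 (cH (r, q))).
Qed.

Lemma meas_inner (H : R -> R -> R) (I : set R) : measurable I -> cont2 H ->
  (forall x y, (0 <= H x y)%R) ->
  measurable_fun setT (fun q => \int[mu]_(r in I) (H r q)%:E).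
Proof.
move=> mI cH H0.
pose f := (fun p : R * R => (H p.1 p.2)%:E) \_ (I `*` [set: R]).
have mf : measurable_fun setT f.
  apply/(measurable_restrictT _ _).1; first exact: measurableX.
  apply: measurable_funTS; apply/measurable_EFinP; exact: cont2_measurable.
have f0 : forall p, 0 <= f p.
  by move=> p; rewrite /f /patch; case: ifP => // _; rewrite lee_fin.
have := @measurable_fun_fubini_tonelli_G _ _ _ _ _ mu f mf f0.
apply: eq_measurable_fun => q _; rewrite /fubini_G [RHS]integral_mkcond.
by apply: eq_integral => r _; rewrite /f /patch in_setX in_setT andbT.
Qed.


Lemma cont2_cabs2 (u v : R -> R -> R) : cont2 u -> cont2 v -> cont2 (cabs2 u v).
Proof.
move=> cu cv p; rewrite /cabs2.
by apply: cvgD; apply: cvgM; [exact: cu|exact: cu|exact: cv|exact: cv].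
Qed.

Lemma cabs2_ge0 (u v : R -> R -> R) x y : (0 <= cabs2 u v x y)%R.
Proof. by rewrite /cabs2 addr_ge0 // sqr_ge0. Qed.

Definition fam (U : nat -> nat -> R -> R -> R) := forall i j, cont2 (U i j) /\
  forall x y : R, is_derive x 1%R (fun t => U i j t y) (U i.+1 j x y) /\
             is_derive y 1%R (fun t => U i j x t) (U i j.+1 x y).

Definition Phi (H : R -> R -> R) (I J : set R) :=
  \int[mu]_(q in J) \int[mu]_(r in I) (H r q)%:E.

Lemma Phi_ge0 H I J : (forall x y, (0 <= H x y)%R) -> 0 <= Phi H I J.
Proof. by move=> H0; apply: integral_ge0 => q _; apply: integral_ge0 => r _; rewrite lee_fin. Qed.


Section fams.
Variables (U V : nat -> nat -> R -> R -> R).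
Hypotheses (hU : fam U) (hV : fam V).
Let HUV i j := cabs2 (U i j) (V i j).

Lemma cHUV i j : cont2 (HUV i j).
Proof. by apply: cont2_cabs2; [exact: (hU i j).1|exact: (hV i j).1]. Qed.

Lemma step3 j c1 d1 c2 d2 x : (c1 < d1)%R -> x \in `[c1, d1[ ->
  \int[mu]_(q in `[c2, d2[) (HUV 0%N j x q)%:E <=
  (2 / (d1 - c1))%:E * Phi (HUV 0%N j) `[c1, d1[ `[c2, d2[
  + (2 * (d1 - c1))%:E * Phi (HUV 1%N j) `[c1, d1[ `[c2, d2[.
Proof.
move=> cd xI.
pose F0 := fun q => \int[mu]_(r in `[c1, d1[) (HUV 0%N j r q)%:E.
pose F1 := fun q => \int[mu]_(r in `[c1, d1[) (HUV 1%N j r q)%:E.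
have mF0 : measurable_fun setT F0.
  by apply: meas_inner => //; [exact: cHUV|move=> *; exact: cabs2_ge0].
have mF1 : measurable_fun setT F1.
  by apply: meas_inner => //; [exact: cHUV|move=> *; exact: cabs2_ge0].
have F00 q : 0 <= F0 q by apply: integral_ge0 => r _; rewrite lee_fin cabs2_ge0.
have F10 q : 0 <= F1 q by apply: integral_ge0 => r _; rewrite lee_fin cabs2_ge0.
have a0 : (0 <= 2 / (d1 - c1))%R by rewrite divr_ge0 // subr_ge0 ltW.
have b0 : (0 <= 2 * (d1 - c1))%R by rewrite mulr_ge0 // subr_ge0 ltW.
have step : \int[mu]_(q in `[c2, d2[) (HUV 0%N j x q)%:E <=
   \int[mu]_(q in `[c2, d2[) ((2 / (d1 - c1))%:E * F0 q + (2 * (d1 - c1))%:E * F1 q).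
  apply: ge0_le_integral => //.
  - by move=> q _; rewrite lee_fin cabs2_ge0.
  - apply: measurable_funTS; apply/measurable_EFinP; exact: (continuous_measurable_fun (@slice2 (HUV 0%N j) x (@cHUV 0%N j))).
  - apply: measurable_funTS; apply: emeasurable_funD; exact: measurable_funeM.
  - move=> q _; rewrite /F0 /F1 /HUV /cabs2.
    apply: (@lemA _ (fun r => U 0%N j r q) (fun r => V 0%N j r q)
                    (fun r => U 1%N j r q) (fun r => V 1%N j r q)) => //.
    + by move=> r; exact: ((hU 0%N j).2 r q).1.
    + by move=> r; exact: ((hV 0%N j).2 r q).1.
    + exact: slice1 (hU 1%N j).1.
    + exact: slice1 (hV 1%N j).1.
apply: (le_trans step); rewrite ge0_integralD //; last 4 first.
- by move=> q _; rewrite mule_ge0.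
- apply: measurable_funTS; exact: measurable_funeM.
- by move=> q _; rewrite mule_ge0.
- apply: measurable_funTS; exact: measurable_funeM.
rewrite ge0_integralZl //; last exact: measurable_funTS.
by rewrite ge0_integralZl //; exact: measurable_funTS.
Qed.

End fams.
End S2.

Section S3.
Variable R : realType.
Notation mu := (@lebesgue_measure R).
Local Open Scope ereal_scope.
Section fams.
Variables (U V : nat -> nat -> R -> R -> R).
Hypotheses (hU : fam U) (hV : fam V).
Let HUV i j := cabs2 (U i j) (V i j).
Lemma sum4 (a b c d : \bar R) : a + b + (c + d) = b + d + c + a.
Proof.
by rewrite addeACA (addeC (a + c)) (addeC a c) addeA.
Qed.

Lemma stepB c1 d1 c2 d2 x y : (c1 < d1)%R -> (c2 < d2)%R ->
  x \in `[c1, d1[ -> y \in `[c2, d2[ ->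
  (HUV 0%N 0%N x y)%:E <= 4%:E * (
    ((d1 - c1) / (d2 - c2))%:E * Phi (HUV 1%N 0%N) `[c1, d1[ `[c2, d2[
  + ((d1 - c1) * (d2 - c2))%:E * Phi (HUV 1%N 1%N) `[c1, d1[ `[c2, d2[
  + ((d2 - c2) / (d1 - c1))%:E * Phi (HUV 0%N 1%N) `[c1, d1[ `[c2, d2[
  + ((d1 - c1) * (d2 - c2))^-1%:E * Phi (HUV 0%N 0%N) `[c1, d1[ `[c2, d2[).
Proof.
move=> cd1 cd2 xI yI.
have h1 : (HUV 0%N 0%N x y)%:E <=
   (2 / (d2 - c2))%:E * \int[mu]_(q in `[c2, d2[) (HUV 0%N 0%N x q)%:E
   + (2 * (d2 - c2))%:E * \int[mu]_(q in `[c2, d2[) (HUV 0%N 1%N x q)%:E.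
  rewrite /HUV /cabs2.
  apply: (@lemA _ (fun t => U 0%N 0%N x t) (fun t => V 0%N 0%N x t)
                  (fun t => U 0%N 1%N x t) (fun t => V 0%N 1%N x t)) => //.
  + by move=> t; exact: ((hU 0%N 0%N).2 x t).2.
  + by move=> t; exact: ((hV 0%N 0%N).2 x t).2.
  + exact: slice2 (hU 0%N 1%N).1.
  + exact: slice2 (hV 0%N 1%N).1.
have hA := @step3 R U V hU hV 0%N c1 d1 c2 d2 x cd1 xI.
have hB := @step3 R U V hU hV 1%N c1 d1 c2 d2 x cd1 xI.
set l1 := (d1 - c1)%R in hA hB *; set l2 := (d2 - c2)%R in h1 *.
have l10 : (0 < l1)%R by rewrite subr_gt0.
have l20 : (0 < l2)%R by rewrite subr_gt0.
have P0 := @Phi_ge0 R (HUV 0%N 0%N) `[c1, d1[ `[c2, d2[ (fun x y => cabs2_ge0 _ _ x y).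
have P1 := @Phi_ge0 R (HUV 1%N 0%N) `[c1, d1[ `[c2, d2[ (fun x y => cabs2_ge0 _ _ x y).
have P2 := @Phi_ge0 R (HUV 0%N 1%N) `[c1, d1[ `[c2, d2[ (fun x y => cabs2_ge0 _ _ x y).
have P3 := @Phi_ge0 R (HUV 1%N 1%N) `[c1, d1[ `[c2, d2[ (fun x y => cabs2_ge0 _ _ x y).
set p0 := Phi (HUV 0%N 0%N) _ _ in hA P0 *.
set p1 := Phi (HUV 1%N 0%N) _ _ in hA P1 *.
set p2 := Phi (HUV 0%N 1%N) _ _ in hB P2 *.
set p3 := Phi (HUV 1%N 1%N) _ _ in hB P3 *.
apply: (le_trans h1).
clearbody p0 p1 p2 p3 l1 l2.
have e0 : (0 <= 2 / l2)%R by rewrite divr_ge0 // ltW.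
have e1 : (0 <= 2 * l2)%R by rewrite mulr_ge0 // ltW.
apply: (le_trans (leeD (lee_wpmul2l _ hA) (lee_wpmul2l _ hB))); rewrite ?lee_fin //.
have f0 : (0 <= 2 / l1)%R by rewrite divr_ge0 // ltW.
have f1 : (0 <= 2 * l1)%R by rewrite mulr_ge0 // ltW.
have f0E : 0 <= (2 / l1)%:E by rewrite lee_fin.
have f1E : 0 <= (2 * l1)%:E by rewrite lee_fin.
have E1 : (2 / l2)%:E * ((2 / l1)%:E * p0 + (2 * l1)%:E * p1) =
    (2 / l2 * (2 / l1))%:E * p0 + (2 / l2 * (2 * l1))%:E * p1.
  rewrite (ge0_muleDr _ (mule_ge0 f0E P0) (mule_ge0 f1E P1)).
  by rewrite (muleA (2 / l2)%:E) (muleA (2 / l2)%:E) -!EFinM.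
have E2 : (2 * l2)%:E * ((2 / l1)%:E * p2 + (2 * l1)%:E * p3) =
    (2 * l2 * (2 / l1))%:E * p2 + (2 * l2 * (2 * l1))%:E * p3.
  rewrite (ge0_muleDr _ (mule_ge0 f0E P2) (mule_ge0 f1E P3)).
  by rewrite (muleA (2 * l2)%:E) (muleA (2 * l2)%:E) -!EFinM.
have g1 : 0 <= (l1 / l2)%:E by rewrite lee_fin divr_ge0 // ltW.
have g2 : 0 <= (l1 * l2)%:E by rewrite lee_fin mulr_ge0 // ltW.
have g3 : 0 <= (l2 / l1)%:E by rewrite lee_fin divr_ge0 // ltW.
have g4 : 0 <= ((l1 * l2)^-1)%:E by rewrite lee_fin invr_ge0 mulr_ge0 // ltW.
have k1 := mule_ge0 g1 P1.
have k2 := mule_ge0 g2 P3.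
have k3 := mule_ge0 g3 P2.
have k4 := mule_ge0 g4 P0.
have E3 : 4%:E * ((l1 / l2)%:E * p1 + (l1 * l2)%:E * p3 + (l2 / l1)%:E * p2 +
   ((l1 * l2)^-1)%:E * p0) = (4 * (l1 / l2))%:E * p1 + (4 * (l1 * l2))%:E * p3
   + (4 * (l2 / l1))%:E * p2 + (4 * (l1 * l2)^-1)%:E * p0.
  rewrite (ge0_muleDr _ (adde_ge0 (adde_ge0 k1 k2) k3) k4).
  rewrite (ge0_muleDr _ (adde_ge0 k1 k2) k3).
  rewrite (ge0_muleDr _ k1 k2).
  by rewrite !(muleA 4%:E) -!EFinM.
rewrite E1 E2 E3.
have -> : (2 / l2 * (2 / l1) = 4 * (l1 * l2)^-1)%R.
  by field; rewrite !lt0r_neq0.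
have -> : (2 / l2 * (2 * l1) = 4 * (l1 / l2))%R.
  by field; rewrite lt0r_neq0.
have -> : (2 * l2 * (2 / l1) = 4 * (l2 / l1))%R.
  by field; rewrite lt0r_neq0.
have -> : (2 * l2 * (2 * l1) = 4 * (l1 * l2))%R by ring.
by rewrite sum4.
Qed.

End fams.
End S3.

Section S5.
Variable R : realType.
Notation mu := (@lebesgue_measure R).
Local Open Scope ereal_scope.

Lemma sum_atmost1 (T : eqType) (s : seq T) (t : T -> \bar R) (c : \bar R) :
  uniq s -> 0 <= c -> (forall b, t b = 0 \/ t b = c) ->
  (forall b g, t b != 0 -> t g != 0 -> b = g) -> \sum_(b <- s) t b <= c.
Proof.
move=> + c0 tc tu; elim: s => [|b s IH]; first by rewrite big_nil.
rewrite big_cons /= => /andP[bs us].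
have [tb0|tbn] := eqVneq (t b) 0; first by rewrite tb0 add0e; exact: IH.
have -> : \sum_(g <- s) t g = 0.
  rewrite big1_seq // => g /= gs; apply/eqP; apply/negPn/negP => tg.
  by move: bs; rewrite (tu _ _ tbn tg) gs.
by case: (tc b) => ->; rewrite adde0.
Qed.

Definition Iv (l : R) (a : int) : set R := `[(l * a%:~R - l / 2)%R, (l * a%:~R + l / 2)%R[%classic.

Lemma cellE l1 l2 a : cell l1 l2 a = Iv l1 a.1 `*` Iv l2 a.2.
Proof.
apply/seteqP; split => p /=; rewrite /cell /Iv /= !in_itv /=.
  by move=> [/andP[-> ->] /andP[-> ->]].
by move=> [/andP[-> ->] /andP[-> ->]].
Qed.

Lemma Iv_uniq l a b x : (0 < l)%R -> x \in Iv l a -> x \in Iv l b -> a = b.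
Proof.
move=> l0; rewrite /Iv !inE /= !in_itv /= => /andP[h1 h2] /andP[h3 h4].
have k1 : ((a - b)%:~R < (1%Z)%:~R :> R)%R.
  rewrite rmorphB rmorph1 /=; rewrite -(ltr_pM2l l0) mulr1 mulrBr; lra.
have k2 : ((b - a)%:~R < (1%Z)%:~R :> R)%R.
  rewrite rmorphB rmorph1 /=; rewrite -(ltr_pM2l l0) mulr1 mulrBr; lra.
move: k1 k2; rewrite !ltr_int => k1 k2; lia.
Qed.


Lemma joint_meas (H : R -> R -> R) : cont2 H ->
  measurable_fun setT (fun p : R * R => (H p.1 p.2)%:E).
Proof. by move=> cH; apply/measurable_EFinP; exact: cont2_measurable. Qed.

Lemma sum_le_int2 (H : R -> R -> R) l1 l2 (X : set (int * int)) :
  cont2 H -> (forall x y, (0 <= H x y)%R) -> (0 < l1)%R -> (0 < l2)%R -> finite_set X ->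
  \sum_(a \in X) Phi H (Iv l1 a.1) (Iv l2 a.2) <= int2 H.
Proof.
move=> cH H0 l10 l20 finX.
rewrite int2_iter // fsbig_finite //=.
set s := finmap.enum_fset _.
have us : uniq s by exact: finmap.fset_uniq.
pose P (a : int * int) := (fun p : R * R => (H p.1 p.2)%:E) \_ (Iv l1 a.1 `*` Iv l2 a.2).
have mP a : measurable_fun setT (P a).
  apply/(measurable_restrictT _ _).1; first by apply: measurableX; exact: measurable_itv.
  apply: measurable_funTS; exact: joint_meas.
have P0 a p : 0 <= P a p by rewrite /P /patch; case: ifP => // _; rewrite lee_fin.
pose Psi a q := \int[mu]_r P a (r, q).
have mPsi a : measurable_fun setT (Psi a).
  exact: (@measurable_fun_fubini_tonelli_G _ _ _ _ _ mu (P a) (mP a) (P0 a)).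
have Psi0 a q : 0 <= Psi a q by apply: integral_ge0 => r _.
have E a : Phi H (Iv l1 a.1) (Iv l2 a.2) = \int[mu]_q Psi a q.
  rewrite /Phi [LHS]integral_mkcond; apply: eq_integral => q _.
  rewrite /patch; case: ifP => qJ.
    rewrite [LHS]integral_mkcond; apply: eq_integral => r _.
    by rewrite /P /patch in_setX /= qJ andbT.
  apply/esym; apply: integral0_eq => r _.
  by rewrite /P /patch in_setX /= qJ andbF.
under eq_bigr do rewrite E.
rewrite -ge0_integral_sum //.
apply: ge0_le_integral => //.
- by move=> q _; apply: sume_ge0 => a _.
- exact: emeasurable_sum.
- have f0 : forall p : R * R, 0 <= (H p.1 p.2)%:E by move=> p; rewrite lee_fin.
  have := (@measurable_fun_fubini_tonelli_G _ _ _ _ _ mu _ (joint_meas cH) f0).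
  by apply: eq_measurable_fun => q _.
move=> q _; rewrite /Psi -ge0_integral_sum //; last first.
  by move=> a; exact: (measurable_fun_pair1 q (mP a)).
apply: ge0_le_integral => //.
- by move=> r _; apply: sume_ge0 => a _.
- by apply: emeasurable_sum => a; exact: (measurable_fun_pair1 q (mP a)).
- exact: (measurable_fun_pair1 q (joint_meas cH)).
move=> r _; apply: sum_atmost1 => //.
- by rewrite lee_fin.
- by move=> a; rewrite /P /patch; case: ifP => _; [right|left].
- move=> a b; rewrite /P /patch; case: ifP => ha; last by rewrite eqxx.
  case: ifP => hb; last by rewrite eqxx.
  move=> _ _; move: ha hb; rewrite !in_setX /= => /andP[ha1 ha2] /andP[hb1 hb2].
  have e1 := Iv_uniq l10 ha1 hb1.
  have e2 := Iv_uniq l20 ha2 hb2.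
  by case: a e1 e2 {ha1 ha2} => a1 a2; case: b {hb1 hb2} => b1 b2 /= -> ->.
Qed.
End S5.

Lemma d1_fam (R : realType) (U : nat -> nat -> R -> R -> R) i j : fam U ->
  d1 (U i j) = U i.+1 j.
Proof.
move=> hU; apply/funext => x; apply/funext => y.
by rewrite /d1 derive1E; apply: derive_val; exact: ((hU i j).2 x y).1.
Qed.

Lemma d2_fam (R : realType) (U : nat -> nat -> R -> R -> R) i j : fam U ->
  d2 (U i j) = U i j.+1.
Proof.
move=> hU; apply/funext => x; apply/funext => y.
by rewrite /d2 derive1E; apply: derive_val; exact: ((hU i j).2 x y).2.
Qed.

Theorem mainTheorem3 (R : realType) :
  exists C : R, 0 < C /\
  forall (a1 b1 a2 b2 : R) (u v : R -> R -> R),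
    a1 < b1 -> a2 < b2 -> smooth2 u -> smooth2 v ->
    let l1 := b1 - a1 in let l2 := b2 - a2 in
    (\esum_(al in [set: int * int]) supcell u v l1 l2 al
     <= C%:E * ((l1 / l2)%:E * int2 (cabs2 (d1 u) (d1 v))
               + (l1 * l2)%:E * int2 (cabs2 (d2 (d1 u)) (d2 (d1 v)))
               + (l2 / l1)%:E * int2 (cabs2 (d2 u) (d2 v))
               + (l1 * l2)^-1%:E * int2 (cabs2 u v)))%E.
Proof.
exists 4; split => //.
move=> a1 b1 a2 b2 u v ab1 ab2 [U [U0 hU]] [V [V0 hV]].
cbv zeta.
set l1 := b1 - a1; set l2 := b2 - a2.
have fU : fam U := hU.
have fV : fam V := hV.
subst u v.
rewrite !d1_fam // !d2_fam //.
have l10 : 0 < l1 by rewrite /l1 subr_gt0.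
have l20 : 0 < l2 by rewrite /l2 subr_gt0.
clearbody l1 l2.
Local Open Scope ereal_scope.
pose HUV i j := cabs2 (U i j) (V i j).
pose Ph i j (a : int * int) := Phi (HUV i j) (Iv l1 a.1) (Iv l2 a.2).
have Ph0 i j a : 0 <= Ph i j a.
  by apply: Phi_ge0 => x y; exact: cabs2_ge0.
have hb a : supcell (U 0%N 0%N) (V 0%N 0%N) l1 l2 a <= 4%:E * (
    (l1 / l2)%:E * Ph 1%N 0%N a + (l1 * l2)%:E * Ph 1%N 1%N a
  + (l2 / l1)%:E * Ph 0%N 1%N a + ((l1 * l2)^-1)%:E * Ph 0%N 0%N a).
  apply: ge_ereal_sup => _ [p pc <-].
  rewrite cellE in pc; case: pc => pI pJ.
  have c1d1 : (l1 * a.1%:~R - l1 / 2 < l1 * a.1%:~R + l1 / 2)%R.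
    by rewrite ltrD2l gtrN // divr_gt0.
  have c2d2 : (l2 * a.2%:~R - l2 / 2 < l2 * a.2%:~R + l2 / 2)%R.
    by rewrite ltrD2l gtrN // divr_gt0.
  have := stepB fU fV c1d1 c2d2 pI pJ.
  have -> : (l1 * a.1%:~R + l1 / 2 - (l1 * a.1%:~R - l1 / 2) = l1)%R.
    by field.
  have -> : (l2 * a.2%:~R + l2 / 2 - (l2 * a.2%:~R - l2 / 2) = l2)%R.
    by field.
  by [].
rewrite /esum; apply: ge_ereal_sup => _ [X [finX _] <-].
apply: (le_trans (lee_fsum finX (fun a _ => hb a))).
have S i j : \sum_(a \in X) Ph i j a <= int2 (HUV i j).
  apply: sum_le_int2 => //; first exact: (@cHUV R U V fU fV i j).
  by move=> x y; exact: cabs2_ge0.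
have S10 := S 1%N 0%N; have S11 := S 1%N 1%N; have S01 := S 0%N 1%N; have S00 := S 0%N 0%N.
have FF (f : int * int -> \bar R) : \sum_(a \in X) f a = \sum_(a <- finmap.enum_fset (fset_set X)) f a.
  exact: fsbig_finite.
rewrite FF in S10; rewrite FF in S11; rewrite FF in S01; rewrite FF in S00; rewrite FF.
clear FF.
have g1 : 0 <= (l1 / l2)%:E by rewrite lee_fin divr_ge0 // ltW.
have g2 : 0 <= (l1 * l2)%:E by rewrite lee_fin mulr_ge0 // ltW.
have g3 : 0 <= (l2 / l1)%:E by rewrite lee_fin divr_ge0 // ltW.
have g4 : 0 <= ((l1 * l2)^-1)%:E by rewrite lee_fin invr_ge0 mulr_ge0 // ltW.
rewrite -ge0_sume_distrr; last first.
  move=> a _; rewrite !adde_ge0 //; exact: mule_ge0.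
apply: lee_wpmul2l; first by rewrite lee_fin.
rewrite !big_split /=.
rewrite -(ge0_sume_distrr _ _ (fun a _ => Ph0 1%N 0%N a)).
rewrite -(ge0_sume_distrr _ _ (fun a _ => Ph0 1%N 1%N a)).
rewrite -(ge0_sume_distrr _ _ (fun a _ => Ph0 0%N 1%N a)).
rewrite -(ge0_sume_distrr _ _ (fun a _ => Ph0 0%N 0%N a)).
by apply: leeD; [apply: leeD; [apply: leeD|]|]; apply: lee_wpmul2l.
Qed.
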